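(* Let $a<b$, let $F:(a,b)\to\mathcal{K}(\mathbb{R}^n)$ and let $x_0\in(a,b)$. (i) If $F$ is metrically differentiable from the right (respectively, from the left) at $x_0$, then $F$ is right (respectively, left) continuous at $x_0$ with respect to the Hausdorff metric, i.e. $\lim_{x\to x_0^+}\mathrm{haus}(F(x),F(x_0))=0$ (respectively, $\lim_{x\to x_0^-}\mathrm{haus}(F(x),F(x_0))=0$). (ii) If $F$ is constant on $(a,b)$, then for every $x\in(a,b)$ and every $y\in F(x)$ one has $D^M_+F(x)|_y=\{0\}$ and $D^M_-F(x)|_y=\{0\}$. (iii) If $F$ is metrically differentiable from the right (respectively, from the left) at $x_0$ and $y_0\in F(x_0)$ is such that $D^M_+F(x_0)|_{y_0}\neq\{0\}$ (respectively, $D^M_-F(x_0)|_{y_0}\neq\{0\}$), then $(x_0,y_0)$ lies on the boundary (in $\mathbb{R}\times\mathbb{R}^n$) of $\mathrm{Graph}(F)=\{(x,y): x\in(a,b),\ y\in F(x)\}$.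
   Context: $\mathcal{K}(\mathbb{R}^n)$ is the set of nonempty compact subsets of $\mathbb{R}^n$, $|\cdot|$ the Euclidean norm, $\mathrm{dist}(x,A)=\min_{a\in A}|x-a|$, and $\mathrm{haus}$ the Hausdorff distance. For $a\in\mathbb{R}^n$, $B\in\mathcal{K}(\mathbb{R}^n)$, $\Pi_B(a)=\{b\in B: |a-b|=\mathrm{dist}(a,B)\}$. For $A,B\in\mathcal{K}(\mathbb{R}^n)$ the set of metric pairs is $\Pi(A,B)=\{(a,b)\in A\times B: a\in\Pi_A(b)\text{ or } b\in\Pi_B(a)\}$. For $x_0\neq x$ in $(a,b)$ and $y_0\in F(x_0)$, the first metric divided difference anchored at $y_0$ is $[x_0,x]^MF|_{y_0}=\{\frac{y-y_0}{x-x_0}: (y_0,y)\in\Pi(F(x_0),F(x))\}$. $F$ is metrically differentiable from the right at $x_0$ if for every $y\in F(x_0)$ there is a nonempty set $D^M_+F(x_0)|_y$ of vectors such that for every $\epsilon>0$ there is $\delta>0$ with $\sup_{y\in F(x_0)}\mathrm{haus}(D^M_+F(x_0)|_y,[x_0,x]^MF|_y)<\epsilon$ whenever $0<x-x_0<\delta$; $D^M_+F(x_0)|_y$ is the right metric derivative of $F$ at $x_0$ anchored at $y$. Metric differentiability from the left and $D^M_-F(x_0)|_y$ are defined in the same way with $0<x_0-x<\delta$. *)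

(* Defs.v *)
From HB Require Import structures.
From mathcomp Require Import all_boot all_order all_algebra.
From mathcomp Require Import all_classical all_reals all_analysis.
Set Implicit Arguments. Unset Strict Implicit. Unset Printing Implicit Defensive.
Import Order.TTheory GRing.Theory Num.Theory.
Import numFieldNormedType.Exports.
Local Open Scope classical_set_scope.
Local Open Scope ring_scope.

Section MetricDefs.
Variables (R : realType) (n : nat).
Local Notation V := 'rV[R]_n.

Definition enorm (v : V) : R := Num.sqrt (\sum_(i < n) v ord0 i ^+ 2).

Definition edist (x : V) (A : set V) : \bar R :=
  ereal_inf [set (enorm (x - a))%:E | a in A].

Definition ehaus (A B : set V) : \bar R :=
  maxe (ereal_sup [set edist a B | a in A]) (ereal_sup [set edist b A | b in B]).

Definition mproj (B : set V) (a : V) : set V :=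
  [set b | B b /\ (enorm (a - b))%:E = edist a B].

Definition mpairs (A B : set V) : set (V * V) :=
  [set p | A p.1 /\ B p.2 /\ (mproj A p.2 p.1 \/ mproj B p.1 p.2)].

Definition mdivdiff (F : R -> set V) (x0 x : R) (y0 : V) : set V :=
  [set (x - x0)^-1 *: (y - y0) | y in [set y | mpairs (F x0) (F x) (y0, y)]].

(* D is a right metric derivative of F : (a,b) -> K(R^n) at x0
   (D y = D^M_+ F(x0)|_y for y in F(x0)) *)
Definition is_right_mderiv (a b : R) (F : R -> set V) (x0 : R)
    (D : V -> set V) : Prop :=
  (forall y, F x0 y -> D y !=set0) /\
  forall eps : R, 0 < eps -> exists2 delta : R, 0 < delta &
    forall x, a < x < b -> 0 < x - x0 < delta ->
      (ereal_sup [set ehaus (D y) (mdivdiff F x0 x y) | y in F x0] < eps%:E)%E.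

Definition is_left_mderiv (a b : R) (F : R -> set V) (x0 : R)
    (D : V -> set V) : Prop :=
  (forall y, F x0 y -> D y !=set0) /\
  forall eps : R, 0 < eps -> exists2 delta : R, 0 < delta &
    forall x, a < x < b -> 0 < x0 - x < delta ->
      (ereal_sup [set ehaus (D y) (mdivdiff F x0 x y) | y in F x0] < eps%:E)%E.

Definition right_mdifferentiable a b F x0 : Prop :=
  exists D, is_right_mderiv a b F x0 D.
Definition left_mdifferentiable a b F x0 : Prop :=
  exists D, is_left_mderiv a b F x0 D.

Definition graph (a b : R) (F : R -> set V) : set (R * V) :=
  [set p | a < p.1 < b /\ F p.1 p.2].

Definition boundary {T : topologicalType} (A : set T) : set T :=
  closure A `\` interior A.

End MetricDefs.

(* Main.v *)
Require Import Defs.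
From HB Require Import structures.
From mathcomp Require Import all_boot all_order all_algebra.
From mathcomp Require Import all_classical all_reals all_analysis.
From mathcomp Require Import ring lra.
Import Order.TTheory GRing.Theory Num.Theory.
Import numFieldNormedType.Exports.
Local Open Scope classical_set_scope.
Local Open Scope ring_scope.

Local Notation edist := Defs.edist.
Section H.
Local Set Implicit Arguments. Local Unset Strict Implicit.
Variables (R : realType) (n : nat).
Local Notation V := 'rV[R]_n.

Lemma enorm_ge0 (v : V) : 0 <= enorm v.
Proof. exact: sqrtr_ge0. Qed.

Lemma enorm_sqr (v : V) : enorm v ^+ 2 = \sum_(i < n) v ord0 i ^+ 2.
Proof. by rewrite /enorm sqr_sqrtr // sumr_ge0 // => i _; rewrite sqr_ge0. Qed.

Lemma enorm_eq0 (v : V) : enorm v = 0 -> v = 0.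
Proof.
move=> /eqP; rewrite /enorm sqrtr_eq0 => H.
have H0 : \sum_(i < n) v ord0 i ^+ 2 = 0.
  by apply/eqP; rewrite eq_le H sumr_ge0 // => i _; rewrite sqr_ge0.
apply/rowP => i; rewrite mxE.
have := psumr_eq0P (fun i _ => sqr_ge0 (v ord0 i)) H0 (i:=i) isT.
by move/eqP; rewrite sqrf_eq0 => /eqP.
Qed.

Lemma enorm0 : enorm (0 : V) = 0.
Proof. by rewrite /enorm big1 ?sqrtr0 // => i _; rewrite mxE expr0n. Qed.

Lemma enormZ c (v : V) : enorm (c *: v) = `|c| * enorm v.
Proof.
rewrite /enorm (eq_bigr (fun i => c ^+ 2 * v ord0 i ^+ 2)).
  by rewrite -mulr_sumr sqrtrM ?sqr_ge0 // sqrtr_sqr.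
by move=> i _; rewrite mxE exprMn.
Qed.

Lemma enormN (v : V) : enorm (- v) = enorm v.
Proof. by rewrite -scaleN1r enormZ normrN normr1 mul1r. Qed.

Lemma enormB (u v : V) : enorm (u - v) = enorm (v - u).
Proof. by rewrite -enormN opprB. Qed.

Lemma cauchy_schwarz (u v : V) :
  \sum_(i < n) u ord0 i * v ord0 i <= enorm u * enorm v.
Proof.
set p := enorm u; set q := enorm v.
have key : 2 * (p * q) * (\sum_(i < n) u ord0 i * v ord0 i) <=
           2 * ((p * q) ^+ 2).
  have -> : 2 * ((p * q) ^+ 2) = \sum_(i < n) (u ord0 i ^+ 2 * q ^+ 2 + v ord0 i ^+ 2 * p ^+ 2).
    rewrite big_split /= -!mulr_suml -/p -/q -enorm_sqr -enorm_sqr -/p -/q.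
    by rewrite exprMn; ring.
  rewrite mulr_sumr; apply: ler_sum => i _.
  rewrite -subr_ge0.
  have -> : u ord0 i ^+ 2 * q ^+ 2 + v ord0 i ^+ 2 * p ^+ 2 - 2 * (p * q) * (u ord0 i * v ord0 i)
    = (u ord0 i * q - v ord0 i * p) ^+ 2 by ring.
  exact: sqr_ge0.
have [pq0|pq0] := eqVneq (p * q) 0.
  move/eqP: pq0; rewrite mulf_eq0 => /orP[] /eqP /enorm_eq0 ->;
    (rewrite big1; [exact: mulr_ge0 (enorm_ge0 _) (enorm_ge0 _)|
      by move=> i _; rewrite mxE ?mul0r ?mulr0]).
have pqgt : 0 < p * q by rewrite lt_def pq0 (mulr_ge0 (enorm_ge0 _) (enorm_ge0 _)).
rewrite -(ler_pM2l (_ : 0 < 2 * (p * q))); last by rewrite mulr_gt0.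
by apply: (le_trans key); rewrite expr2 mulrA.
Qed.

Lemma enormD (u v : V) : enorm (u + v) <= enorm u + enorm v.
Proof.
rewrite -(ler_pXn2r (_ : 0 < 2)%N) ?nnegrE ?addr_ge0 ?enorm_ge0 //.
rewrite enorm_sqr (eq_bigr (fun i => u ord0 i ^+ 2 + v ord0 i ^+ 2 + 2 * (u ord0 i * v ord0 i))); last first.
  by move=> i _; rewrite !mxE; ring.
rewrite !big_split /= -!enorm_sqr -mulr_sumr.
have := cauchy_schwarz u v => cs.
rewrite sqrrD; lra.
Qed.


Lemma enorm_cont : continuous (@enorm R n).
Proof.
move=> v; apply: (@continuous_comp _ _ _ (fun v : V => \sum_(i < n) v ord0 i ^+ 2) (@Num.sqrt R)).
  apply: (@continuous_big R _ +%R 0 xpredT add_continuous _ (index_enum 'I_n)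
     (fun i (v : V) => v ord0 i ^+ 2)) => i _ w.
  rewrite /=.
  have -> : (fun v0 : V => v0 ord0 i ^+ 2) = (fun v0 : V => v0 ord0 i) \* (fun v0 : V => v0 ord0 i).
    by apply/funext => z /=; rewrite expr2.
  by apply: continuousM; apply: coord_continuous.
exact: sqrt_continuous.
Qed.

Lemma enorm_dist_cont (v : V) : continuous (fun u : V => enorm (v - u)).
Proof.
have -> : (fun u : V => enorm (v - u)) = Num.sqrt \o (fun u : V => \sum_(i < n) (v ord0 i - u ord0 i) ^+ 2).
  by apply/funext => z; rewrite /enorm /=; congr Num.sqrt; apply: eq_bigr => i _; rewrite !mxE.
move=> u; apply: continuous_comp; last exact: sqrt_continuous.
  apply: (@continuous_big R _ +%R 0 xpredT add_continuous _ (index_enum 'I_n)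
     (fun i (u : V) => (v ord0 i - u ord0 i) ^+ 2)) => i _ w.
  have -> : (fun u0 : V => (v ord0 i - u0 ord0 i) ^+ 2) =
    (fun u0 : V => v ord0 i - u0 ord0 i) \* (fun u0 : V => v ord0 i - u0 ord0 i).
    by apply/funext => z /=; rewrite expr2.
  by apply: continuousM; apply: (@continuousB R R^o _ (fun _ => v ord0 i) (fun u0 : V => u0 ord0 i));
    first [exact: cst_continuous | exact: coord_continuous].
Qed.

Lemma edist_ge0 (v : V) (A : set V) : (0 <= edist v A)%E.
Proof. by apply: le_ereal_inf_tmp => _ [a _ <-]; rewrite lee_fin enorm_ge0. Qed.

Lemma edist_le (v : V) (A : set V) a : A a -> (edist v A <= (enorm (v - a))%:E)%E.
Proof. by move=> Aa; apply: ereal_inf_lbound; exists a. Qed.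

Lemma nearest (v : V) (A : set V) : compact A -> A !=set0 -> exists b, mproj A v b.
Proof.
move=> cA A0.
have [c cA' cmin] := EVT_min_rV A0 cA
  (continuous_subspaceT (@enorm_dist_cont v)).
rewrite inE in cA'.
exists c; split => //; apply/eqP; rewrite eq_le edist_le // andbT.
apply: le_ereal_inf_tmp => _ [a Aa <-]; rewrite lee_fin; apply: cmin; by rewrite inE.
Qed.


Lemma interior_ball (A : set (R * V)) x0 y0 : interior A (x0, y0) ->
  exists2 r : R, 0 < r & forall x (y : V), `|x0 - x| < r ->
    (forall i, `|y0 ord0 i - y ord0 i| < r) -> A (x, y).
Proof.
move=> /nbhs_ballP [e e0 H]; exists e => // x y hx hy; apply: H; split => /=.
  by rewrite /ball /=.
split => // i j; rewrite (ord1 i) /ball /=; exact: hy.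
Qed.


Lemma coord_le_enorm (v : V) i : `|v ord0 i| <= enorm v.
Proof.
rewrite -(ler_pXn2r (_ : 0 < 2)%N) ?nnegrE ?enorm_ge0 // enorm_sqr real_normK ?num_real //.
rewrite (bigD1 i) //= lerDl sumr_ge0 // => j _; exact: sqr_ge0.
Qed.

Lemma edist_self (v : V) (B : set V) : B v -> edist v B = 0%E.
Proof.
move=> Bv; apply/eqP; rewrite eq_le edist_ge0 andbT.
by apply: le_trans (edist_le v Bv) _; rewrite subrr enorm0.
Qed.

Lemma mproj_self (z y : V) (B : set V) : B z -> mproj B z y -> y = z.
Proof.
move=> Bz [_ h]; rewrite edist_self // in h.
by case: h => /enorm_eq0 /eqP; rewrite subr_eq0 => /eqP.
Qed.

Lemma mproj_selfT (z : V) (B : set V) : B z -> mproj B z z.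
Proof. by move=> Bz; split => //; rewrite edist_self // subrr enorm0. Qed.

Lemma mdivdiff_zero (F : R -> set V) x0 x y0 :
  F x0 y0 -> F x y0 -> (forall y, F x y -> mproj (F x0) y y0 -> y = y0) ->
  mdivdiff F x0 x y0 = [set 0].
Proof.
move=> A0 B0 H; apply/seteqP; split => [_ [y [/= Ay0 [By hp]] <-]|_ ->].
  case: hp => hp.
    by rewrite /= (H y By hp) subrr scaler0.
  by rewrite /= -(mproj_self B0 hp) subrr scaler0.
exists y0; last by rewrite subrr scaler0.
by split => //; split => //; right; exact: mproj_selfT.
Qed.

Lemma edist0 (d : V) : edist d [set 0] = (enorm d)%:E.
Proof.
rewrite /edist (_ : [set _ | a in _] = [set (enorm d)%:E]) ?ereal_inf1 //.
apply/seteqP; split => [_ [a -> <-]|_ ->]; first by rewrite subr0.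
by exists 0 => //; rewrite subr0.
Qed.

Lemma ehaus00 : ehaus [set (0 : V)] [set 0] = 0%E.
Proof.
rewrite /ehaus (_ : [set edist a [set 0] | a in [set (0:V)]] = [set 0%E]).
  by rewrite ereal_sup1 maxxx.
apply/seteqP; split => [_ [a -> <-]|_ ->]; first by rewrite edist0 enorm0.
by exists 0 => //; rewrite edist0 enorm0.
Qed.

Lemma zero_lemma (A : set V) : A !=set0 ->
  (forall eps : R, 0 < eps -> (ehaus A [set (0:V)%R] < eps%:E)%E) -> A = [set 0].
Proof.
move=> [d0 Ad0] H.
have Z : forall d, A d -> d = 0.
  move=> d Ad; apply: enorm_eq0; apply/eqP; rewrite eq_le enorm_ge0 andbT.
  apply/ler_addgt0Pr => e e0; rewrite add0r.
  have := H e e0; rewrite /ehaus => h.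
  rewrite -lee_fin -edist0; apply/ltW; apply: le_lt_trans h.
  rewrite le_max; apply/orP; left.
  by apply: ereal_sup_ubound; exists d.
apply/seteqP; split => [d /Z -> //|_ ->].
by rewrite -(Z _ Ad0).
Qed.


Lemma right_zero a b (F : R -> set V) x0 (D : V -> set V) y r :
  a < x0 < b -> 0 < r -> is_right_mderiv a b F x0 D -> F x0 y ->
  (forall x, a < x < b -> x0 < x < x0 + r -> mdivdiff F x0 x y = [set 0]) ->
  D y = [set 0].
Proof.
move=> /andP[ax0 x0b] r0 [Dne Dc] Fy H.
apply: zero_lemma; first exact: Dne.
move=> eps e0; have [d d0 Hd] := Dc eps e0.
pose m := Num.min (Num.min d r) (b - x0).
have m0 : 0 < m by rewrite /m !lt_min d0 r0 subr_gt0 x0b.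
have hm1 : m <= d by rewrite /m !ge_min lexx.
have hm2 : m <= r by rewrite /m !ge_min lexx orbT.
have hm3 : m <= b - x0 by rewrite /m !ge_min lexx orbT.
pose x := x0 + m / 2.
have hx : a < x < b by apply/andP; split; rewrite /x; lra.
have hxx : 0 < x - x0 < d by apply/andP; split; rewrite /x; lra.
have hxr : x0 < x < x0 + r by apply/andP; split; rewrite /x; lra.
have := Hd x hx hxx; rewrite -(H x hx hxr).
apply: le_lt_trans; apply: ereal_sup_ubound; by exists y.
Qed.

Lemma left_zero a b (F : R -> set V) x0 (D : V -> set V) y r :
  a < x0 < b -> 0 < r -> is_left_mderiv a b F x0 D -> F x0 y ->
  (forall x, a < x < b -> x0 - r < x < x0 -> mdivdiff F x0 x y = [set 0]) ->
  D y = [set 0].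
Proof.
move=> /andP[ax0 x0b] r0 [Dne Dc] Fy H.
apply: zero_lemma; first exact: Dne.
move=> eps e0; have [d d0 Hd] := Dc eps e0.
pose m := Num.min (Num.min d r) (x0 - a).
have m0 : 0 < m by rewrite /m !lt_min d0 r0 subr_gt0 ax0.
have hm1 : m <= d by rewrite /m !ge_min lexx.
have hm2 : m <= r by rewrite /m !ge_min lexx orbT.
have hm3 : m <= x0 - a by rewrite /m !ge_min lexx orbT.
pose x := x0 - m / 2.
have hx : a < x < b by apply/andP; split; rewrite /x; lra.
have hxx : 0 < x0 - x < d by apply/andP; split; rewrite /x; lra.
have hxr : x0 - r < x < x0 by apply/andP; split; rewrite /x; lra.
have := Hd x hx hxx; rewrite -(H x hx hxr).
apply: le_lt_trans; apply: ereal_sup_ubound; by exists y.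
Qed.


Lemma const_mdivdiff a b (F : R -> set V) x x' y :
  (forall x y, a < x < b -> a < y < b -> F x = F y) -> a < x < b -> a < x' < b ->
  F x y -> mdivdiff F x x' y = [set 0].
Proof.
move=> Fc hx hx' Fy; have E := Fc _ _ hx' hx.
apply: mdivdiff_zero => //; first by rewrite E.
by move=> y' Fy' hp; rewrite E in Fy'; rewrite (mproj_self Fy' hp).
Qed.

Lemma const_right a b (F : R -> set V) x :
  (forall x y, a < x < b -> a < y < b -> F x = F y) -> a < x < b ->
  is_right_mderiv a b F x (fun _ => [set 0]).
Proof.
move=> Fc hx; split; first by move=> y _; exists 0.
move=> eps e0; exists 1 => // x' hx' _.
apply: (@le_lt_trans _ _ 0%E); last by rewrite lte_fin.
apply: ge_ereal_sup => _ [y Fy <-].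
by rewrite (const_mdivdiff Fc hx hx' Fy) ehaus00.
Qed.

Lemma const_left a b (F : R -> set V) x :
  (forall x y, a < x < b -> a < y < b -> F x = F y) -> a < x < b ->
  is_left_mderiv a b F x (fun _ => [set 0]).
Proof.
move=> Fc hx; split; first by move=> y _; exists 0.
move=> eps e0; exists 1 => // x' hx' _.
apply: (@le_lt_trans _ _ 0%E); last by rewrite lte_fin.
apply: ge_ereal_sup => _ [y Fy <-].
by rewrite (const_mdivdiff Fc hx hx' Fy) ehaus00.
Qed.

Lemma interior_zero a b (F : R -> set V) x0 y0 :
  F x0 y0 -> interior (graph a b F) (x0, y0) ->
  exists2 r : R, 0 < r & forall x, `|x0 - x| < r -> mdivdiff F x0 x y0 = [set 0].
Proof.
move=> F0 /interior_ball [r r0 H]; exists r => // x hx.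
have G : forall x (y : V), `|x0 - x| < r -> (forall i, `|y0 ord0 i - y ord0 i| < r) -> F x y.
  by move=> x1 y1 h1 h2; case: (H x1 y1 h1 h2).
apply: mdivdiff_zero => //.
  by apply: G => // i; rewrite subrr normr0.
move=> y Fy [_ hp]; apply/eqP; rewrite -subr_eq0; apply/negPn/negP => yn.
pose L := enorm (y - y0).
have L0 : 0 < L.
  rewrite lt_def enorm_ge0 andbT; apply/negP => /eqP /enorm_eq0 /eqP; exact/negP.
pose t := r / (2 * (L + r)).
have t0 : 0 < t by rewrite /t divr_gt0 // mulr_gt0 // addr_gt0.
have t1 : t < 1.
  by rewrite /t ltr_pdivrMr ?mulr_gt0 ?addr_gt0 // mul1r; lra.
have tL : t * L < r.
  rewrite /t mulrAC ltr_pdivrMr ?mulr_gt0 ?addr_gt0 //.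
  have : 0 < r * L by rewrite mulr_gt0.
  nra.
pose z := y0 + t *: (y - y0).
have Fz : F x0 z.
  apply: G; first by rewrite subrr normr0.
  move=> i; rewrite /z !mxE opprD addNKr normrN normrM gtr0_norm //.
  apply: le_lt_trans tL; rewrite ler_pM2l //. by have := coord_le_enorm (y - y0) i; rewrite !mxE.
have := edist_le y Fz; rewrite -hp lee_fin.
have -> : y - z = (1 - t) *: (y - y0).
  by rewrite /z scalerBl scale1r opprD addrA.
rewrite enormZ gtr0_norm ?subr_gt0 // -/L.
have : 0 < t * L by rewrite mulr_gt0.
nra.
Qed.


Lemma cbound (A : set V) : compact A -> A !=set0 -> exists B, forall y, A y -> enorm y <= B.
Proof.
move=> cA A0.
have [c _ cmax] := EVT_max_rV A0 cA (continuous_subspaceT (@enorm_cont)).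
by exists (enorm c) => y Ay; apply: cmax; rewrite inE.
Qed.

Lemma haus_near1 (A B : set V) a : (ehaus A B < 1%:E)%E -> A a ->
  exists b, B b /\ enorm (a - b) < 1.
Proof.
move=> h Aa.
have : (edist a B < 1%:E)%E.
  apply: le_lt_trans h; rewrite /ehaus le_max; apply/orP; left.
  by apply: ereal_sup_ubound; exists a.
by case/ereal_inf_lt => _ [b Bb <-]; rewrite lte_fin => hb; exists b.
Qed.

Lemma haus_near2 (A B : set V) b : (ehaus A B < 1%:E)%E -> B b ->
  exists a, A a /\ enorm (b - a) < 1.
Proof.
move=> h Bb.
have : (edist b A < 1%:E)%E.
  apply: le_lt_trans h; rewrite /ehaus le_max; apply/orP; right.
  by apply: ereal_sup_ubound; exists b.
by case/ereal_inf_lt => _ [a Aa <-]; rewrite lte_fin => ha; exists a.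
Qed.

Lemma enormB_le (u v : V) : enorm (u - v) <= enorm u + enorm v.
Proof. by rewrite -(enormN v); apply: enormD. Qed.

Lemma enorm_divdiff (x x0 : R) (u v : V) : x != x0 ->
  enorm (u - v) = `|x - x0| * enorm ((x - x0)^-1 *: (u - v)).
Proof.
move=> hx; rewrite enormZ normfV mulrA mulfV ?mul1r //.
by rewrite normr_eq0 subr_eq0.
Qed.

Lemma haus_bound (F : R -> set V) x0 x C : x != x0 ->
  compact (F x) -> F x !=set0 -> compact (F x0) -> F x0 !=set0 ->
  (forall y0 q, F x0 y0 -> mdivdiff F x0 x y0 q -> enorm q <= C) ->
  (ehaus (F x) (F x0) <= (`|x - x0| * C)%:E)%E.
Proof.
move=> hx cx nx c0 n0 H; rewrite /ehaus ge_max; apply/andP; split;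
  apply: ge_ereal_sup => _ [u Fu <-].
  have [v [F0v hv]] := nearest u c0 n0.
  rewrite -hv lee_fin (enorm_divdiff u v hx) ler_wpM2l //.
  apply: (H v) => //; exists u => //; split => //; split => //; left; exact: conj.
have [v [Fv hv]] := nearest u cx nx.
rewrite -hv lee_fin enormB (enorm_divdiff v u hx) ler_wpM2l //.
apply: (H u) => //; exists v => //; split => //; split => //; right; exact: conj.
Qed.

Lemma D_bound (F : R -> set V) (D : V -> set V) x0 x1 B0 B1 : x1 != x0 ->
  (forall y0, F x0 y0 -> (ehaus (D y0) (mdivdiff F x0 x1 y0) < 1%:E)%E) ->
  (forall y, F x0 y -> enorm y <= B0) -> (forall y, F x1 y -> enorm y <= B1) ->
  forall y0 d, F x0 y0 -> D y0 d -> enorm d <= 1 + `|x1 - x0|^-1 * (B1 + B0).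
Proof.
move=> hx H h0 h1 y0 d F0 Dd.
have [_ [[y [/= _ [F1y _]] <-] hq]] := haus_near1 (H y0 F0) Dd.
have e1 := enormD (d - (x1 - x0)^-1 *: (y - y0)) ((x1 - x0)^-1 *: (y - y0)).
rewrite subrK in e1; apply: (le_trans e1); apply: lerD; first exact: ltW.
rewrite enormZ normfV ler_wpM2l ?invr_ge0 //.
apply: (le_trans (enormB_le _ _)); apply: lerD; [exact: h1 | exact: h0].
Qed.

Lemma q_bound (F : R -> set V) (D : V -> set V) x0 x y0 M q :
  (ehaus (D y0) (mdivdiff F x0 x y0) < 1%:E)%E ->
  (forall d, D y0 d -> enorm d <= M) -> mdivdiff F x0 x y0 q -> enorm q <= 1 + M.
Proof.
move=> H hM hq.
have [d [Dd hd]] := haus_near2 H hq.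
have e1 := enormD (q - d) d; rewrite subrK in e1.
apply: (le_trans e1); apply: lerD; [exact: ltW | exact: hM].
Qed.


Lemma h_cvg (x0 C : R) : (fun x => (`|x - x0| * C)%:E) @ x0 --> 0%E.
Proof.
apply: cvg_EFin; first by near=> x.
rewrite /comp /=.
have H : (fun x => `|x - x0| * C) @ x0 --> `|x0 - x0| * C.
  apply: cvgMl; apply: cvg_norm; apply: cvgB; [exact: cvg_id | exact: cvg_cst].
by rewrite subrr normr0 mul0r in H.
Unshelve. all: by end_near.
Qed.

Lemma ehaus_ge0 (A B : set V) : A !=set0 -> (0 <= ehaus A B)%E.
Proof.
move=> [u Au]; rewrite /ehaus le_max; apply/orP; left.
apply: le_trans (edist_ge0 u B) _; apply: ereal_sup_ubound; by exists u.
Qed.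


Lemma right_cont a b (F : R -> set V) x0 :
  (forall x, a < x < b -> compact (F x) /\ F x !=set0) -> a < x0 < b ->
  right_mdifferentiable a b F x0 ->
  ehaus (F x) (F x0) @[x --> x0^'+] --> 0%E.
Proof.
move=> hF hx0 [D [Dne Dc]]; have /andP[ax0 x0b] := hx0.
have [d1 d10 Hd1] := Dc 1 ltr01.
pose m := Num.min d1 (b - x0).
have m0 : 0 < m by rewrite /m !lt_min d10 subr_gt0 x0b.
have hm1 : m <= d1 by rewrite /m !ge_min lexx.
have hm2 : m <= b - x0 by rewrite /m !ge_min lexx orbT.
pose x1 := x0 + m / 2.
have hx1 : a < x1 < b by apply/andP; split; rewrite /x1; lra.
have hxx1 : 0 < x1 - x0 < d1 by apply/andP; split; rewrite /x1; lra.
have x1n : x1 != x0 by rewrite /x1; apply/eqP; lra.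
have [c0 n0] := hF x0 hx0; have [c1 n1] := hF x1 hx1.
have [B0 hB0] := cbound c0 n0; have [B1 hB1] := cbound c1 n1.
have Hsup : forall x, a < x < b -> 0 < x - x0 < d1 -> forall y0, F x0 y0 ->
    (ehaus (D y0) (mdivdiff F x0 x y0) < 1%:E)%E.
  move=> x hx hxx y0 F0; apply: le_lt_trans (Hd1 x hx hxx).
  by apply: ereal_sup_ubound; exists y0.
have HM := D_bound x1n (Hsup x1 hx1 hxx1) hB0 hB1.
pose C := 1 + (1 + `|x1 - x0|^-1 * (B1 + B0)).
apply: (@squeeze_cvge _ _ _ _ (fun=> 0%E) _ (fun x => (`|x - x0| * C)%:E)).
- near=> x.
  have h1 : x0 < x by near: x; exact: nbhs_right_gt.
  have h2 : x < x0 + m by near: x; apply: nbhs_right_lt; lra.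
  have hx : a < x < b by apply/andP; split; lra.
  have hxx : 0 < x - x0 < d1 by apply/andP; split; lra.
  have [cx nx] := hF x hx.
  rewrite ehaus_ge0 //=.
  apply: haus_bound => //.
  move=> y0 q F0 hq; apply: (q_bound (Hsup x hx hxx y0 F0)) => // d Dd.
  exact: HM Dd.
- exact: cvg_cst.
- exact: cvg_at_right_filter (h_cvg x0 C).
Unshelve. all: end_near.
Qed.

Lemma left_cont a b (F : R -> set V) x0 :
  (forall x, a < x < b -> compact (F x) /\ F x !=set0) -> a < x0 < b ->
  left_mdifferentiable a b F x0 ->
  ehaus (F x) (F x0) @[x --> x0^'-] --> 0%E.
Proof.
move=> hF hx0 [D [Dne Dc]]; have /andP[ax0 x0b] := hx0.
have [d1 d10 Hd1] := Dc 1 ltr01.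
pose m := Num.min d1 (x0 - a).
have m0 : 0 < m by rewrite /m !lt_min d10 subr_gt0 ax0.
have hm1 : m <= d1 by rewrite /m !ge_min lexx.
have hm2 : m <= x0 - a by rewrite /m !ge_min lexx orbT.
pose x1 := x0 - m / 2.
have hx1 : a < x1 < b by apply/andP; split; rewrite /x1; lra.
have hxx1 : 0 < x0 - x1 < d1 by apply/andP; split; rewrite /x1; lra.
have x1n : x1 != x0 by rewrite /x1; apply/eqP; lra.
have [c0 n0] := hF x0 hx0; have [c1 n1] := hF x1 hx1.
have [B0 hB0] := cbound c0 n0; have [B1 hB1] := cbound c1 n1.
have Hsup : forall x, a < x < b -> 0 < x0 - x < d1 -> forall y0, F x0 y0 ->
    (ehaus (D y0) (mdivdiff F x0 x y0) < 1%:E)%E.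
  move=> x hx hxx y0 F0; apply: le_lt_trans (Hd1 x hx hxx).
  by apply: ereal_sup_ubound; exists y0.
have HM := D_bound x1n (Hsup x1 hx1 hxx1) hB0 hB1.
pose C := 1 + (1 + `|x1 - x0|^-1 * (B1 + B0)).
apply: (@squeeze_cvge _ _ _ _ (fun=> 0%E) _ (fun x => (`|x - x0| * C)%:E)).
- near=> x.
  have h1 : x < x0 by near: x; exact: nbhs_left_lt.
  have h2 : x0 - m < x by near: x; apply: nbhs_left_gt; lra.
  have hx : a < x < b by apply/andP; split; lra.
  have hxx : 0 < x0 - x < d1 by apply/andP; split; lra.
  have [cx nx] := hF x hx.
  rewrite ehaus_ge0 //=.
  apply: haus_bound => //.
  move=> y0 q F0 hq; apply: (q_bound (Hsup x hx hxx y0 F0)) => // d Dd.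
  exact: HM Dd.
- exact: cvg_cst.
- exact: cvg_at_left_filter (h_cvg x0 C).
Unshelve. all: end_near.
Qed.

End H.

Theorem mainTheorem1 (R : realType) (n : nat) (a b : R) (F : R -> set 'rV[R]_n)
  (x0 : R) :
  a < b ->
  (forall x, a < x < b -> compact (F x) /\ F x !=set0) ->
  a < x0 < b ->
  (* (i) *)
  ((right_mdifferentiable a b F x0 ->
      ehaus (F x) (F x0) @[x --> x0^'+] --> 0%E) /\
   (left_mdifferentiable a b F x0 ->
      ehaus (F x) (F x0) @[x --> x0^'-] --> 0%E)) /\
  (* (ii) *)
  ((forall x y, a < x < b -> a < y < b -> F x = F y) ->
    forall x, a < x < b ->
      (is_right_mderiv a b F x (fun _ => [set 0]) /\
       forall D, is_right_mderiv a b F x D -> forall y, F x y -> D y = [set 0]) /\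
      (is_left_mderiv a b F x (fun _ => [set 0]) /\
       forall D, is_left_mderiv a b F x D -> forall y, F x y -> D y = [set 0])) /\
  (* (iii) *)
  (forall y0, F x0 y0 ->
    (forall D, is_right_mderiv a b F x0 D -> D y0 <> [set 0] ->
       boundary (graph a b F) (x0, y0)) /\
    (forall D, is_left_mderiv a b F x0 D -> D y0 <> [set 0] ->
       boundary (graph a b F) (x0, y0))).
Proof.
move=> ab hF hx0; split; first by split; [exact: right_cont | exact: left_cont].
split.
  move=> Fc x hx; split; split.
  - exact: const_right.
  - move=> D hD y Fy; apply: (right_zero hx ltr01 hD Fy) => x' hx' _.
    exact: (const_mdivdiff Fc hx hx' Fy).
  - exact: const_left.
  - move=> D hD y Fy; apply: (left_zero hx ltr01 hD Fy) => x' hx' _.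
    exact: (const_mdivdiff Fc hx hx' Fy).
move=> y0 F0; split => D hD hne; split.
- by apply: subset_closure; split.
- move=> hint; apply: hne; have [r r0 Hr] := interior_zero F0 hint.
  apply: (right_zero hx0 r0 hD F0) => x _ /andP[h1 h2]; apply: Hr.
  rewrite ltr_distlC; apply/andP; split; lra.
- by apply: subset_closure; split.
- move=> hint; apply: hne; have [r r0 Hr] := interior_zero F0 hint.
  apply: (left_zero hx0 r0 hD F0) => x _ /andP[h1 h2]; apply: Hr.
  rewrite ltr_distlC; apply/andP; split; lra.
Qed.
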